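(* Assume $\sigma_1(x)=\sigma_1'(0)(x-a_1)$ with $\sigma_1'(0)\ne0$ and $a_1\ne0$ real, and that $\sigma_2(x)=\tfrac12\sigma_2''(0)(x-a_2)(x-b_2)$ (where $\tfrac12\sigma_2''(0)=(q-1)\tau'(0)$) has real zeros with $a_1<0<a_2\le b_2$; assume $\Lambda_q:=\tau'(0)/\sigma_1'(0)<0$. Put $a=b_2$ and $$\rho(x)=|x|^{\alpha}\sqrt{x^{\log_qx-1}}\,\frac{(qa_2/x,\,qa/x;q)_\infty}{(a_1/x;q)_\infty},\qquad q^{\alpha}=\frac{q^{-2}\tfrac12\sigma_2''(0)}{\sigma_1'(0)}.$$ Then there exist polynomials $P_n$, $n\in\mathbb{N}_0$, with $P_n$ of degree $n$ a solution of the q-EHT with $\lambda=\lambda_n$, and nonzero constants $d_n^2$, such that for all $m,n\in\mathbb{N}_0$ $$\int_a^{\infty}P_n(x)P_m(x)\rho(x)\,d_{q^{-1}}x=d_n^2\delta_{mn},$$ i.e. the $P_n$ are orthogonal with respect to $\rho$ supported on $\{q^{-k}a\}_{k\in\mathbb{N}_0}$.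
   Context: Throughout $0<q<1$. For a function $y$ and $\zeta\in\{q,q^{-1}\}$, $D_\zeta y(x)=\frac{y(x)-y(\zeta x)}{(1-\zeta)x}$ for $x\ne0$ and $D_\zeta y(0)=y'(0)$; $[n]_q=\frac{1-q^n}{1-q}$. Let $\sigma_1$ be a real polynomial of degree at most two, $\tau(x)=\tau'(0)x+\tau(0)$ a real polynomial with $\tau'(0)\ne0$, and $\sigma_2(x):=q[\sigma_1(x)+(1-q^{-1})x\tau(x)]$. The q-EHT with parameter $n$ is $\sigma_1(x)D_{q^{-1}}D_qy(x)+\tau(x)D_qy(x)+\lambda_ny(x)=0$, $\lambda_n=-[n]_q\big(\tau'(0)+\tfrac12[n-1]_{q^{-1}}\sigma_1''(0)\big)$. $(\beta;q)_\infty=\prod_{k\ge0}(1-\beta q^k)$, $(\beta_1,\dots,\beta_r;q)_\infty=\prod_i(\beta_i;q)_\infty$. For $q^\alpha=c$ ($c\ne0$), $\alpha$ is any complex number with $e^{\alpha\ln q}=c$ and $|x|^\alpha:=e^{\alpha\ln|x|}$; for $x>0$, $\sqrt{x^{\log_qx-1}}:=\exp\big(\tfrac12(\log_qx-1)\ln x\big)$. For $a>0$, $\int_a^\infty f(x)\,d_{q^{-1}}x=(q^{-1}-1)a\sum_{j\ge0}q^{-j}f(q^{-j}a)$. *)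

(* Defs.v *)
From Stdlib Require Import Reals.
From Coquelicot Require Import Coquelicot.
Open Scope R_scope.

Definition cexp (z : C) : C :=
  (exp (fst z) * cos (snd z), exp (fst z) * sin (snd z)).

Definition abs_cpow (x : R) (alpha : C) : C :=
  cexp (Cmult alpha (RtoC (ln (Rabs x)))).

Definition Dq (zeta : R) (y : R -> R) (x : R) : R :=
  if Req_EM_T x 0 then Derive y 0 else (y x - y (zeta * x)) / ((1 - zeta) * x).

Definition qnum (q : R) (n : Z) : R := (1 - powerRZ q n) / (1 - q).

Definition lambda_n (q tau1 sigma1pp : R) (n : nat) : R :=
  - qnum q (Z.of_nat n) * (tau1 + / 2 * qnum (/ q) (Z.of_nat n - 1) * sigma1pp).

Definition is_poly_deg (y : R -> R) (n : nat) : Prop :=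
  exists c : nat -> R, c n <> 0 /\
    forall x, y x = sum_f_R0 (fun k => c k * x ^ k) n.

Fixpoint qpoch_partial (beta q : R) (N : nat) : R :=
  match N with
  | O => 1
  | S N' => qpoch_partial beta q N' * (1 - beta * q ^ N')
  end.
Definition qpoch_inf (beta q : R) : R :=
  real (Lim_seq (fun N => qpoch_partial beta q N)).

Definition logq (q x : R) : R := ln x / ln q.

(* the weight rho(x) = |x|^alpha sqrt(x^{log_q x - 1}) (q a2/x, q a/x; q)_inf / (a1/x; q)_inf,
   for x > 0, with sqrt(x^{log_q x -1}) := exp(1/2 (log_q x - 1) ln x) *)
Definition rho (q : R) (alpha : C) (a1 a2 a : R) (x : R) : C :=
  Cmult (abs_cpow x alpha)
    (RtoC (exp (/ 2 * (logq q x - 1) * ln x)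
           * qpoch_inf (q * a2 / x) q * qpoch_inf (q * a / x) q
           / qpoch_inf (a1 / x) q)).

(* "int_a^infty f(x) d_{q^{-1}}x = L":  (q^{-1}-1) a sum_{j>=0} q^{-j} f(q^{-j} a) converges to L *)
Definition qint_inf_is (q a : R) (f : R -> C) (L : C) : Prop :=
  is_series (fun j : nat => Cmult (RtoC ((/ q - 1) * a * (/ q) ^ j)) (f ((/ q) ^ j * a))) L.

Definition sigma1 (s1 a1 x : R) : R := s1 * (x - a1).
Definition tau (t t0 x : R) : R := t * x + t0.
Definition sigma2 (q s1 a1 t t0 x : R) : R :=
  q * (sigma1 s1 a1 x + (1 - / q) * x * tau t t0 x).

(* Main.v *)
Require Import Defs.
From Stdlib Require Import Reals Lra Lia.
From Coquelicot Require Import Coquelicot.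
Open Scope R_scope.


Definition ev (N : nat) (c : nat -> R) (x : R) : R := sum_f_R0 (fun k => c k * x ^ k) N.
Definition sh (c : nat -> R) (k : nat) : R := match k with O => 0 | S k' => c k' end.
Fixpoint qs (z : R) (m : nat) : R := match m with O => 0 | S m' => qs z m' + z ^ m' end.
Definition dq (z : R) (c : nat -> R) (k : nat) : R := c (S k) * qs z (S k).

Lemma ev_S N c x : ev (S N) c x = ev N c x + c (S N) * x ^ (S N).
Proof. reflexivity. Qed.

Lemma ev_shift N c x : x * ev N c x = ev (S N) (sh c) x.
Proof.
  induction N.
  - unfold ev; simpl. ring.
  - rewrite ev_S, (ev_S (S N)), <- IHN. simpl. ring.
Qed.

Lemma ev_ext N c d x : (forall k, (k <= N)%nat -> c k = d k) -> ev N c x = ev N d x.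
Proof.
  intro H; induction N.
  - unfold ev; simpl; rewrite H; auto.
  - rewrite !ev_S, IHN by (intros; apply H; lia). rewrite H by lia. reflexivity.
Qed.

Lemma ev_zero N c x : (forall k, (k <= N)%nat -> c k = 0) -> ev N c x = 0.
Proof.
  intro H; induction N.
  - unfold ev; simpl; rewrite H; [ring|auto].
  - rewrite ev_S, IHN by (intros; apply H; lia). rewrite H by lia. ring.
Qed.

Lemma ev_plus N c d x : ev N (fun k => c k + d k) x = ev N c x + ev N d x.
Proof. induction N. unfold ev; simpl; ring. rewrite !ev_S, IHN. ring. Qed.

Lemma ev_scal N a c x : ev N (fun k => a * c k) x = a * ev N c x.
Proof. induction N. unfold ev; simpl; ring. rewrite !ev_S, IHN. ring. Qed.

Lemma ev_minus N c d x : ev N c x - ev N d x = ev N (fun k => c k - d k) x.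
Proof. induction N. unfold ev; simpl; ring. rewrite !ev_S, <- IHN. ring. Qed.

Lemma ev_up N c x : c (S N) = 0 -> ev (S N) c x = ev N c x.
Proof. intro H. rewrite ev_S, H. ring. Qed.

Lemma ev_scalex N c z x : ev N c (z * x) = ev N (fun k => c k * z ^ k) x.
Proof. induction N. unfold ev; simpl; ring. rewrite !ev_S, IHN. rewrite Rpow_mult_distr. ring. Qed.

Lemma ev_at0 N c : ev N c 0 = c O.
Proof. induction N. unfold ev; simpl; ring. rewrite ev_S, IHN. simpl. ring. Qed.

Lemma qs_prop z m : (1 - z) * qs z m = 1 - z ^ m.
Proof. induction m; simpl. ring. rewrite Rmult_plus_distr_l, IHm. ring. Qed.

Lemma Dq_ev_nz z N c x : z <> 1 -> x <> 0 -> c (S N) = 0 ->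
  (ev N c x - ev N c (z * x)) / ((1 - z) * x) = ev N (dq z c) x.
Proof.
  intros Hz Hx Hc.
  assert (E1 : ev N c x - ev N c (z * x) = (1 - z) * ev N (fun k => c k * qs z k) x).
  { rewrite ev_scalex, ev_minus, <- ev_scal. apply ev_ext. intros k _. replace (c k - c k * z ^ k) with (c k * (1 - z ^ k)) by ring. rewrite <- qs_prop. ring. }
  assert (E2 : ev N (fun k => c k * qs z k) x = x * ev N (dq z c) x).
  { rewrite ev_shift, ev_up. apply ev_ext. intros [|k] _; unfold sh, dq; simpl; ring.
    unfold sh, dq. rewrite Hc. ring. }
  rewrite E1, E2. field. split; auto. intro h; apply Hz; lra.
Qed.

Lemma is_derive_ev N c x :
  is_derive (ev N c) x (ev N (fun k => c (S k) * INR (S k)) x - c (S N) * INR (S N) * x ^ N).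
Proof.
  induction N.
  - apply (is_derive_ext (fun _ => c O)). intro; unfold ev; simpl; ring.
    replace (ev 0 (fun k => c (S k) * INR (S k)) x - c 1%nat * INR 1 * x ^ 0) with 0
      by (unfold ev; simpl; ring).
    apply (@is_derive_const R_AbsRing R_NormedModule).
  - apply (is_derive_ext (fun y => ev N c y + c (S N) * y ^ (S N))). intro; reflexivity.
    replace (ev (S N) (fun k => c (S k) * INR (S k)) x - c (S (S N)) * INR (S (S N)) * x ^ S N)
      with ((ev N (fun k => c (S k) * INR (S k)) x - c (S N) * INR (S N) * x ^ N)
            + c (S N) * (INR (S N) * 1 * x ^ pred (S N))) by (rewrite ev_S; simpl; ring).
    apply (@is_derive_plus R_AbsRing R_NormedModule). apply IHN.
    apply is_derive_scal. apply is_derive_pow. apply (@is_derive_id R_AbsRing).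
Qed.

Lemma Dq_ev z N c y : z <> 1 -> c (S N) = 0 -> Dq z (ev N c) y = ev N (dq z c) y.
Proof.
  intros Hz Hc. unfold Dq. destruct (Req_EM_T y 0) as [->|Hy].
  - rewrite (is_derive_unique _ _ _ (is_derive_ev N c 0)).
    rewrite !ev_at0. unfold dq; simpl.
    destruct N; simpl. rewrite Hc. ring. ring.
  - apply Dq_ev_nz; auto.
Qed.

Lemma Dq_ext z f g x : (forall y, f y = g y) -> Dq z f x = Dq z g x.
Proof.
  intro H. unfold Dq. destruct (Req_EM_T x 0).
  - apply Derive_ext; auto.
  - rewrite !H. reflexivity.
Qed.

Lemma qnum_nat q n : qnum q (Z.of_nat n) = (1 - q ^ n) / (1 - q).
Proof. unfold qnum. rewrite <- pow_powerRZ. reflexivity. Qed.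

Lemma qs_lt q k n : 0 < q -> (k < n)%nat -> qs q k < qs q n.
Proof.
  intros Hq H. induction H; simpl.
  - pose proof (pow_lt q k Hq). lra.
  - pose proof (pow_lt q m Hq). lra.
Qed.

Section Coef.
Variables (q s1 a1 t t0 : R) (n : nat).
Definition Ak (k : nat) : R := s1 * qs q (S k) * qs (/q) k + t0 * qs q (S k).
Definition Bk (k : nat) : R := - s1 * a1 * qs q (S (S k)) * qs (/q) (S k).
Fixpoint gg (i : nat) : R * R :=
  match i with
  | O => (1, 0)
  | S i' => ((fst (gg i') * Ak (n - S i') + snd (gg i') * Bk (n - S i'))
             / (t * (qs q n - qs q (n - S i'))), fst (gg i'))
  end.
Definition coef (k : nat) : R := if (k <=? n)%nat then fst (gg (n - k)) else 0.

Lemma coef_gt k : (n < k)%nat -> coef k = 0.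
Proof. intro H. unfold coef. destruct (Nat.leb_spec k n); [lia|reflexivity]. Qed.

Lemma coef_n : coef n = 1.
Proof. unfold coef. rewrite Nat.leb_refl, Nat.sub_diag. reflexivity. Qed.

Lemma coef_rec k : (k < n)%nat ->
  coef k = (coef (S k) * Ak k + coef (S (S k)) * Bk k) / (t * (qs q n - qs q k)).
Proof.
  intro H. unfold coef at 1 2.
  destruct (Nat.leb_spec k n); [|lia]. destruct (Nat.leb_spec (S k) n); [|lia].
  replace (n - k)%nat with (S (n - S k)) by lia. cbn [gg fst].
  replace (n - S (n - S k))%nat with k by lia.
  replace (snd (gg (n - S k))) with (coef (S (S k))). reflexivity.
  destruct (Nat.eq_dec (S k) n) as [E|E].
  - rewrite coef_gt by lia. rewrite E, Nat.sub_diag. reflexivity.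
  - unfold coef. destruct (Nat.leb_spec (S (S k)) n); [|lia].
    replace (n - S k)%nat with (S (n - S (S k))) by lia. reflexivity.
Qed.
End Coef.

Definition Pn (q s1 a1 t t0 : R) (n : nat) : R -> R := ev n (coef q s1 a1 t t0 n).

Lemma Pn_eq q s1 a1 t t0 n x : 0 < q < 1 -> t <> 0 ->
  sigma1 s1 a1 x * Dq (/ q) (Dq q (Pn q s1 a1 t t0 n)) x + tau t t0 x * Dq q (Pn q s1 a1 t t0 n) x
  + lambda_n q t 0 n * Pn q s1 a1 t t0 n x = 0.
Proof.
  intros Hq Ht. set (c := coef q s1 a1 t t0 n).
  assert (Hc : forall k, (n < k)%nat -> c k = 0) by (intros; apply coef_gt; auto).
  assert (Hq1 : q <> 1) by lra. assert (Hq1' : / q <> 1).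
  { intro h. assert (q = 1) by (rewrite <- (Rinv_inv q), h; apply Rinv_1). lra. }
  unfold Pn. fold c.
  rewrite (Dq_ext (/ q) (Dq q (ev n c)) (ev n (dq q c))) by (intro; apply Dq_ev; auto).
  rewrite Dq_ev by (auto; unfold dq; rewrite Hc by lia; ring).
  rewrite Dq_ev by auto.
  set (d := dq q c). set (dd := dq (/ q) d).
  assert (Hd : forall k, (n <= k)%nat -> d k = 0) by (intros; unfold d, dq; rewrite Hc by lia; ring).
  assert (Hdd : forall k, (n <= k)%nat -> dd k = 0) by (intros; unfold dd, dq; rewrite Hd by lia; ring).
  assert (Hl : lambda_n q t 0 n = - qs q n * t).
  { unfold lambda_n. rewrite qnum_nat. rewrite <- qs_prop. field. lra. }
  rewrite Hl. unfold sigma1, tau.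
  transitivity (ev (S n) (fun k => s1 * sh dd k - s1 * a1 * dd k + t * sh d k + t0 * d k
                                   - qs q n * t * c k) x).
  2:{ apply ev_zero. intros k Hk.
      destruct (Nat.lt_ge_cases k n) as [Hlt|Hge].
      - assert (Hrec := coef_rec q s1 a1 t t0 n k Hlt). fold c in Hrec.
        assert (Hqs : qs q k < qs q n) by (apply qs_lt; lra || auto).
        unfold dd, d, dq, sh. destruct k as [|k].
        + rewrite Hrec. unfold Ak, Bk. simpl qs in *. field. split; [apply Rgt_not_eq; assumption|auto].
        + rewrite Hrec. unfold Ak, Bk. field. split; [lra|auto].
      - unfold sh. destruct k as [|k].
        + rewrite (Hdd O), (Hd O) by lia. assert (Hn : n = 0%nat) by lia. rewrite Hn. simpl. ring.
        + rewrite (Hdd (S k)), (Hd (S k)) by lia.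
          destruct (Nat.eq_dec (S k) n) as [E|E].
          * unfold dd, d, dq. rewrite (Hc (S (S k))) by lia. rewrite <- E. ring.
          * rewrite (Hdd k), (Hd k) by lia. rewrite Hc by lia. ring. }
  assert (Hcomb : forall N, ev N (fun k => s1 * sh dd k - s1 * a1 * dd k + t * sh d k + t0 * d k
                                   - qs q n * t * c k) x =
     s1 * ev N (sh dd) x - s1 * a1 * ev N dd x + t * ev N (sh d) x + t0 * ev N d x - qs q n * t * ev N c x).
  { induction N. unfold ev; simpl; ring. rewrite !ev_S, IHN. ring. }
  rewrite Hcomb, <- !ev_shift.
  rewrite !(ev_up n) by (rewrite ?Hdd, ?Hd, ?Hc by lia; ring).
  ring.
Qed.

Lemma qpp_S b q N : qpoch_partial b q (S N) = (1 - b) * qpoch_partial (q * b) q N.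
Proof.
  induction N. simpl. ring.
  change (qpoch_partial b q (S (S N))) with (qpoch_partial b q (S N) * (1 - b * q ^ (S N))).
  rewrite IHN. simpl. ring.
Qed.

Lemma real_Rbar_mult (c : R) (l : Rbar) : real (Rbar_mult c l) = c * real l.
Proof.
  destruct l as [r| |]; simpl; [reflexivity| |];
  unfold Rbar_mult, Rbar_mult'; destruct (Rle_dec 0 c) as [h|h];
  try destruct (Rle_lt_or_eq_dec 0 c h); simpl; ring.
Qed.

Lemma qpoch_shift b q : qpoch_inf b q = (1 - b) * qpoch_inf (q * b) q.
Proof.
  unfold qpoch_inf. rewrite <- Lim_seq_incr_1.
  rewrite (Lim_seq_ext _ (fun N => (1 - b) * qpoch_partial (q * b) q N)) by (intro; apply qpp_S).
  rewrite Lim_seq_scal_l. apply real_Rbar_mult.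
Qed.

Lemma qs_bound q N : 0 < q < 1 -> 0 <= qs q N <= / (1 - q).
Proof.
  intro Hq. pose proof (qs_prop q N) as H. pose proof (pow_lt q N (proj1 Hq)) as H1.
  assert (qs q N = (1 - q ^ N) / (1 - q)) by (rewrite <- H; field; lra).
  rewrite H0. split.
  - apply Rmult_le_pos.
    assert (q ^ N <= 1).
    { clear -Hq. induction N. simpl; lra. simpl. nra. } lra.
    left; apply Rinv_0_lt_compat; lra.
  - unfold Rdiv. rewrite <- (Rmult_1_l (/ (1 - q))) at 2. apply Rmult_le_compat_r. left; apply Rinv_0_lt_compat; lra. lra.
Qed.

Lemma qpp_ge1 b q N : 0 < q -> b <= 0 -> 1 <= qpoch_partial b q N.
Proof.
  intros Hq Hb. induction N; simpl. lra.
  pose proof (pow_lt q N Hq).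
  assert (1 <= 1 - b * q ^ N).
  { assert (0 <= - b * q ^ N) by (apply Rmult_le_pos; lra). lra. }
  rewrite <- (Rmult_1_l 1). apply Rmult_le_compat; lra.
Qed.

Lemma qpoch_pos_neg b q : 0 < q < 1 -> b <= 0 -> 1 <= qpoch_inf b q.
Proof.
  intros Hq Hb. set (u := fun N => qpoch_partial b q N).
  assert (Hinc : forall N, u N <= u (S N)).
  { intro N. unfold u; simpl. pose proof (pow_lt q N (proj1 Hq)).
    assert (1 <= 1 - b * q ^ N).
    { assert (0 <= - b * q ^ N) by (apply Rmult_le_pos; lra). lra. }
    pose proof (qpp_ge1 b q N (proj1 Hq) Hb).
    rewrite <- (Rmult_1_r (qpoch_partial b q N)) at 1. apply Rmult_le_compat_l; lra. }
  assert (Hub : forall N, u N <= exp (- b * qs q N)).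
  { induction N. unfold u; simpl. rewrite Rmult_0_r, exp_0. lra.
    unfold u; simpl. fold (u N).
    replace (- b * (qs q N + q ^ N)) with (- b * qs q N + (- b * q ^ N)) by ring.
    rewrite exp_plus. pose proof (pow_lt q N (proj1 Hq)).
    assert (1 - b * q ^ N <= exp (- b * q ^ N)).
    { destruct (Req_dec (- b * q ^ N) 0) as [E|E].
      - rewrite E, exp_0. lra.
      - pose proof (exp_ineq1 _ E). lra. }
    pose proof (qpp_ge1 b q N (proj1 Hq) Hb).
    apply Rmult_le_compat; try lra. unfold u; lra.
    assert (0 <= - b * q ^ N) by (apply Rmult_le_pos; lra). lra. }
  assert (Hfin : ex_finite_lim_seq u).
  { apply (ex_finite_lim_seq_incr u (exp (- b * / (1 - q)))). auto.
    intro N. eapply Rle_trans. apply Hub.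
    destruct (qs_bound q N Hq).
    assert (Hle : - b * qs q N <= - b * / (1 - q)) by (apply Rmult_le_compat_l; lra).
    destruct (Rle_lt_or_eq_dec _ _ Hle) as [h|h].
    - left. apply exp_increasing. exact h.
    - rewrite h; apply Rle_refl. }
  destruct Hfin as [l Hl]. unfold qpoch_inf. fold u. rewrite (is_lim_seq_unique _ _ Hl). simpl.
  assert (H := is_lim_seq_le (fun _ => 1) u 1 l (fun N => qpp_ge1 b q N (proj1 Hq) Hb) (is_lim_seq_const 1) Hl).
  simpl in H. exact H.
Qed.

Lemma pow_le1 q N : 0 <= q <= 1 -> q ^ N <= 1.
Proof. intro H. induction N; simpl. lra. rewrite <- (Rmult_1_l 1). apply Rmult_le_compat; try lra. apply pow_le; lra. Qed.

Lemma qpp_split b q K N : qpoch_partial b q (N + K) = qpoch_partial b q K * qpoch_partial (b * q ^ K) q N.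
Proof.
  induction N. simpl. ring.
  change (qpoch_partial b q (S (N + K)) = qpoch_partial b q K * (qpoch_partial (b * q ^ K) q N * (1 - b * q ^ K * q ^ N))).
  simpl. rewrite IHN, pow_add. ring.
Qed.

Lemma qpp_pos b q N : 0 < q < 1 -> 0 <= b < 1 -> 0 < qpoch_partial b q N.
Proof.
  intros Hq Hb. induction N; simpl. lra.
  assert (q ^ N <= 1) by (apply pow_le1; lra). pose proof (pow_lt q N (proj1 Hq)).
  assert (b * q ^ N < 1).
  { assert (b * q ^ N <= b * 1) by (apply Rmult_le_compat_l; lra). lra. }
  apply Rmult_lt_0_compat; lra.
Qed.

Lemma qpp_weier g q N : 0 < q < 1 -> 0 <= g <= 1 -> 1 - g * qs q N <= qpoch_partial g q N.
Proof.
  intros Hq Hg. induction N; simpl. lra.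
  assert (q ^ N <= 1) by (apply pow_le1; lra). pose proof (pow_lt q N (proj1 Hq)).
  assert (0 <= 1 - g * q ^ N).
  { assert (g * q ^ N <= 1 * 1) by (apply Rmult_le_compat; lra). lra. }
  pose proof (qs_bound q N Hq).
  apply Rle_trans with ((1 - g * qs q N) * (1 - g * q ^ N)).
  - assert (0 <= g * qs q N * (g * q ^ N)).
    { apply Rmult_le_pos; apply Rmult_le_pos; lra. } nra.
  - apply Rmult_le_compat_r; lra.
Qed.

Lemma qpoch_pos_small b q : 0 < q < 1 -> 0 <= b < 1 -> 0 < qpoch_inf b q.
Proof.
  intros Hq Hb. set (u := fun N => qpoch_partial b q N).
  assert (Hdec : forall N, u (S N) <= u N).
  { intro N. unfold u; simpl. pose proof (qpp_pos b q N Hq Hb).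
    pose proof (pow_lt q N (proj1 Hq)).
    assert (0 <= b * q ^ N) by (apply Rmult_le_pos; lra).
    rewrite <- (Rmult_1_r (qpoch_partial b q N)) at 2. apply Rmult_le_compat_l; lra. }
  assert (Hfin : ex_finite_lim_seq u).
  { apply (ex_finite_lim_seq_decr u 0). auto. intro; left; apply qpp_pos; auto. }
  destruct (pow_lt_1_zero q ltac:(rewrite Rabs_pos_eq; lra) ((1 - q) / 2) ltac:(lra)) as [K HK].
  assert (HqK : q ^ K < (1 - q) / 2).
  { specialize (HK K (le_n K)). rewrite Rabs_pos_eq in HK. auto. left; apply pow_lt; lra. }
  set (g := b * q ^ K).
  assert (Hg : 0 <= g <= (1 - q) / 2).
  { pose proof (pow_lt q K (proj1 Hq)). unfold g. split. apply Rmult_le_pos; lra.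
    assert (b * q ^ K <= 1 * q ^ K) by (apply Rmult_le_compat_r; lra). lra. }
  assert (HuK : 0 < u K) by (apply qpp_pos; auto).
  assert (Hlow : forall N, u K / 2 <= u (N + K)%nat).
  { intro N. unfold u. rewrite qpp_split. fold g. fold (u K).
    pose proof (qpp_weier g q N Hq ltac:(lra)). pose proof (qs_bound q N Hq).
    assert (g * qs q N <= (1 - q) / 2 * / (1 - q)) by (apply Rmult_le_compat; lra).
    assert ((1 - q) / 2 * / (1 - q) = / 2) by (field; lra).
    assert (/ 2 <= qpoch_partial g q N) by lra.
    unfold Rdiv. apply Rmult_le_compat_l; lra. }
  destruct Hfin as [l Hl]. unfold qpoch_inf. fold u. rewrite (is_lim_seq_unique _ _ Hl). simpl.
  assert (Hl' : is_lim_seq (fun N => u (N + K)%nat) l).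
  { apply (is_lim_seq_incr_n u K l). auto. }
  assert (H := is_lim_seq_le (fun _ => u K / 2) _ (u K / 2) l Hlow (is_lim_seq_const _) Hl').
  simpl in H. lra.
Qed.

Definition Aco q s1 a1 y := sigma1 s1 a1 y * q ^ 2 / ((1 - q) ^ 2 * y ^ 2).
Definition Bco q s1 a1 t t0 y := sigma2 q s1 a1 t t0 y / ((1 - q) ^ 2 * y ^ 2).

Lemma Dq_lattice q s1 a1 t t0 f y : 0 < q < 1 -> y <> 0 ->
  sigma1 s1 a1 y * Dq (/ q) (Dq q f) y + tau t t0 y * Dq q f y
  = Aco q s1 a1 y * (f (/ q * y) - f y) - Bco q s1 a1 t t0 y * (f y - f (q * y)).
Proof.
  intros Hq Hy. unfold Dq.
  destruct (Req_EM_T y 0) as [E|_]; [contradiction|].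
  destruct (Req_EM_T (/ q * y) 0) as [E|_].
  { apply Rmult_integral in E. destruct E as [E|E]; [|contradiction].
    pose proof (Rinv_neq_0_compat q ltac:(lra)); contradiction. }
  replace (q * (/ q * y)) with y by (field; lra).
  unfold Aco, Bco, sigma2, sigma1, tau. field. repeat split; try lra; auto.
Qed.

Lemma cexp_add z1 z2 : cexp (Cplus z1 z2) = Cmult (cexp z1) (cexp z2).
Proof.
  destruct z1 as [a b], z2 as [c d]. unfold cexp, Cplus, Cmult; simpl.
  rewrite exp_plus, cos_plus, sin_plus. f_equal; ring.
Qed.

Lemma my_div_lt_1 a b : 0 < b -> a < b -> a / b < 1.
Proof. intros Hb H. unfold Rdiv. apply Rmult_lt_reg_r with b; auto. rewrite Rmult_assoc, Rinv_l; lra. Qed.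

Definition xl (q b2 : R) (j : nat) : R := (/ q) ^ j * b2.
Definition Rw (q a1 a2 b2 y : R) : R :=
  exp (/ 2 * (logq q y - 1) * ln y) * qpoch_inf (q * a2 / y) q * qpoch_inf (q * b2 / y) q
  / qpoch_inf (a1 / y) q.

Lemma xl_S q b2 j : xl q b2 (S j) = / q * xl q b2 j.
Proof. unfold xl; simpl; ring. Qed.

Lemma xl_ge q b2 j : 0 < q < 1 -> 0 < b2 -> b2 <= xl q b2 j.
Proof.
  intros Hq Hb. unfold xl. induction j. simpl; lra.
  simpl. assert (1 <= / q). { rewrite <- Rinv_1. apply Rinv_le_contravar; lra. }
  assert (0 <= (/ q) ^ j * b2) by lra.
  replace (/ q * (/ q) ^ j * b2) with (/ q * ((/ q) ^ j * b2)) by ring.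
  rewrite <- (Rmult_1_l ((/ q) ^ j * b2)) in IHj. nra.
Qed.

Lemma exp_part_step q y : 0 < q < 1 -> 0 < y ->
  exp (/ 2 * (logq q (/ q * y) - 1) * ln (/ q * y)) = exp (/ 2 * (logq q y - 1) * ln y) * (q / y).
Proof.
  intros Hq Hy. unfold logq.
  assert (Hl : ln (/ q * y) = - ln q + ln y).
  { rewrite ln_mult, ln_Rinv; try lra. apply Rinv_0_lt_compat; lra. }
  assert (Hlq : ln q < 0) by (rewrite <- ln_1; apply ln_increasing; lra).
  rewrite Hl.
  replace (/ 2 * ((- ln q + ln y) / ln q - 1) * (- ln q + ln y))
    with (/ 2 * (ln y / ln q - 1) * ln y + (ln q + - ln y)) by (field; lra).
  rewrite exp_plus, exp_plus, exp_ln by lra. rewrite exp_Ropp, exp_ln by lra.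
  unfold Rdiv. ring.
Qed.

Lemma Rw_step q a1 a2 b2 y : 0 < q < 1 -> 0 < y -> a1 < 0 ->
  Rw q a1 a2 b2 (/ q * y) * ((1 - q * a2 / y) * (1 - q * b2 / y))
  = Rw q a1 a2 b2 y * (q / y) * (1 - a1 / y).
Proof.
  intros Hq Hy Ha1. unfold Rw. rewrite exp_part_step by auto.
  replace (q * a2 / (/ q * y)) with (q * (q * a2 / y)) by (field; lra).
  replace (q * b2 / (/ q * y)) with (q * (q * b2 / y)) by (field; lra).
  replace (a1 / (/ q * y)) with (q * (a1 / y)) by (field; lra).
  rewrite (qpoch_shift (q * a2 / y)), (qpoch_shift (q * b2 / y)), (qpoch_shift (a1 / y)).
  assert (0 < qpoch_inf (q * (a1 / y)) q).
  { assert (1 <= qpoch_inf (q * (a1 / y)) q); [|lra]. apply qpoch_pos_neg; auto.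
    assert (a1 / y < 0) by (apply Rdiv_neg_pos; auto). nra. }
  assert (1 - a1 / y <> 0).
  { assert (a1 / y < 0) by (apply Rdiv_neg_pos; auto). lra. }
  field. repeat split; lra.
Qed.

Definition cc (q s1 t : R) : R := / q ^ 2 * ((q - 1) * t) / s1.
Definition w (q s1 a1 a2 b2 t : R) (j : nat) : R :=
  (/ q - 1) * b2 * (/ q) ^ j * (/ cc q s1 t) ^ j * Rw q a1 a2 b2 (xl q b2 j).
Definition rr (q s1 a1 a2 b2 t y : R) : R := / cc q s1 t * (y - a1) / ((y - q * a2) * (y - q * b2)).

Lemma cc_pos q s1 t : 0 < q < 1 -> s1 <> 0 -> t / s1 < 0 -> 0 < cc q s1 t.
Proof.
  intros Hq Hs Hts. unfold cc.
  replace (/ q ^ 2 * ((q - 1) * t) / s1) with (/ q ^ 2 * (1 - q) * (- (t / s1))) by (field; lra).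
  apply Rmult_lt_0_compat; [apply Rmult_lt_0_compat|lra]; [|lra].
  apply Rinv_0_lt_compat. nra.
Qed.

Lemma w_step q s1 a1 a2 b2 t j : 0 < q < 1 -> a1 < 0 -> 0 < a2 <= b2 -> s1 <> 0 -> t / s1 < 0 ->
  w q s1 a1 a2 b2 t (S j) = w q s1 a1 a2 b2 t j * rr q s1 a1 a2 b2 t (xl q b2 j).
Proof.
  intros Hq Ha1 Hab Hs Hts. pose proof (xl_ge q b2 j Hq ltac:(lra)) as Hy.
  set (y := xl q b2 j) in *.
  assert (Hya : q * a2 < y) by nra. assert (Hyb : q * b2 < y) by nra.
  pose proof (cc_pos q s1 t Hq Hs Hts).
  assert (HR := Rw_step q a1 a2 b2 y Hq ltac:(lra) Ha1).
  assert (E : Rw q a1 a2 b2 (/ q * y) =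
     Rw q a1 a2 b2 y * (q / y) * (1 - a1 / y) / ((1 - q * a2 / y) * (1 - q * b2 / y))).
  { rewrite <- HR. field. repeat split; lra. }
  unfold w, rr. rewrite xl_S. fold y. rewrite E. simpl.
  field. repeat split; lra.
Qed.

Lemma pearson q s1 a1 a2 b2 t t0 y : 0 < q < 1 -> s1 <> 0 -> t <> 0 -> 0 < y ->
  (forall x, sigma2 q s1 a1 t t0 x = (q - 1) * t * (x - a2) * (x - b2)) ->
  y - q * a2 <> 0 -> y - q * b2 <> 0 ->
  rr q s1 a1 a2 b2 t y * Bco q s1 a1 t t0 (/ q * y) = Aco q s1 a1 y.
Proof.
  intros Hq Hs Ht Hy Hsig Ha Hb. unfold rr, Bco, Aco, cc. rewrite Hsig. unfold sigma1.
  field. repeat split; try lra; auto.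
Qed.

Lemma sum_id (W A B F G Fm Gm : nat -> R) (lf lg : R) :
  (forall j, A j * (F (S j) - F j) - B j * (F j - Fm j) + lf * F j = 0) ->
  (forall j, A j * (G (S j) - G j) - B j * (G j - Gm j) + lg * G j = 0) ->
  (forall j, Fm (S j) = F j) -> (forall j, Gm (S j) = G j) -> B O = 0 ->
  (forall j, W j * A j = W (S j) * B (S j)) ->
  forall N, (lf - lg) * sum_f_R0 (fun j => W j * F j * G j) N
            = W N * A N * (F N * G (S N) - G N * F (S N)).
Proof.
  intros Hf Hg HF HG HB0 HP N. induction N.
  - simpl. specialize (Hf O). specialize (Hg O). rewrite HB0 in Hf, Hg.
    assert (E : (lf - lg) * (W 0%nat * F 0%nat * G 0%nat) - W 0%nat * A 0%nat * (F 0%nat * G 1%nat - G 0%nat * F 1%nat)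
      = W 0%nat * (G 0%nat * (A 0%nat * (F 1%nat - F 0%nat) - 0 * (F 0%nat - Fm 0%nat) + lf * F 0%nat)
           - F 0%nat * (A 0%nat * (G 1%nat - G 0%nat) - 0 * (G 0%nat - Gm 0%nat) + lg * G 0%nat))) by ring.
    rewrite Hf, Hg in E. lra.
  - cbn [sum_f_R0]. rewrite Rmult_plus_distr_l, IHN.
    specialize (Hf (S N)). specialize (Hg (S N)). rewrite HF in Hf. rewrite HG in Hg.
    rewrite (HP N).
    set (a := A (S N)) in *. set (b := B (S N)) in *.
    assert (E : W (S N) * b * (F N * G (S N) - G N * F (S N)) + (lf - lg) * (W (S N) * F (S N) * G (S N))
      - W (S N) * a * (F (S N) * G (S (S N)) - G (S N) * F (S (S N)))
      = W (S N) * (G (S N) * (a * (F (S (S N)) - F (S N)) - b * (F (S N) - F N) + lf * F (S N))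
           - F (S N) * (a * (G (S (S N)) - G (S N)) - b * (G (S N) - G N) + lg * G (S N)))) by ring.
    rewrite Hf, Hg in E. lra.
Qed.

Lemma rr_bound q s1 a1 a2 b2 t y : 0 < q < 1 -> a1 < 0 -> 0 < a2 <= b2 -> s1 <> 0 -> t / s1 < 0 ->
  b2 <= y ->
  0 < rr q s1 a1 a2 b2 t y /\
  rr q s1 a1 a2 b2 t y <= / cc q s1 t * (1 - a1 / b2) / (1 - q) ^ 2 / y.
Proof.
  intros Hq Ha1 Hab Hs Hts Hy. pose proof (cc_pos q s1 t Hq Hs Hts) as Hc.
  assert (Hya : (1 - q) * y <= y - q * a2) by nra.
  assert (Hyb : (1 - q) * y <= y - q * b2) by nra.
  assert (H1q : 0 < (1 - q) * y) by nra.
  assert (Hcinv : 0 < / cc q s1 t) by (apply Rinv_0_lt_compat; auto).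
  split.
  - unfold rr. apply Rdiv_lt_0_compat. apply Rmult_lt_0_compat; lra. apply Rmult_lt_0_compat; lra.
  - unfold rr, Rdiv.
    apply Rle_trans with (/ cc q s1 t * ((1 - a1 / b2) * y) * / (((1 - q) * y) * ((1 - q) * y))).
    + apply Rmult_le_compat.
      * apply Rmult_le_pos; lra.
      * left; apply Rinv_0_lt_compat; apply Rmult_lt_0_compat; lra.
      * apply Rmult_le_compat_l; [lra|].
        assert (0 <= - a1 * (y - b2) / b2).
        { apply Rmult_le_pos; [apply Rmult_le_pos; lra|left; apply Rinv_0_lt_compat; lra]. }
        replace ((1 - a1 / b2) * y) with (y - a1 + - a1 * (y - b2) / b2) by (field; lra). lra.
      * apply Rinv_le_contravar. apply Rmult_lt_0_compat; lra.
        apply Rmult_le_compat; lra.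
    + right. field. repeat split; lra.
Qed.

Lemma w_pos q s1 a1 a2 b2 t : 0 < q < 1 -> a1 < 0 -> 0 < a2 <= b2 -> s1 <> 0 -> t / s1 < 0 ->
  forall j, 0 < w q s1 a1 a2 b2 t j.
Proof.
  intros Hq Ha1 Hab Hs Hts j. induction j.
  - unfold w, xl, Rw. simpl. rewrite !Rmult_1_l.
    assert (0 < qpoch_inf (q * a2 / b2) q).
    { apply qpoch_pos_small; auto. split. apply Rdiv_le_0_compat; nra.
      apply my_div_lt_1; nra. }
    assert (0 < qpoch_inf (q * b2 / b2) q).
    { replace (q * b2 / b2) with q by (field; lra). apply qpoch_pos_small; lra. }
    assert (1 <= qpoch_inf (a1 / b2) q).
    { apply qpoch_pos_neg; auto. assert (a1 / b2 < 0) by (apply Rdiv_neg_pos; lra). lra. }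
    assert (0 < / q - 1).
    { assert (1 < / q). rewrite <- Rinv_1. apply Rinv_lt_contravar; lra. lra. }
    pose proof (exp_pos (/ 2 * (logq q b2 - 1) * ln b2)).
    apply Rmult_lt_0_compat. repeat apply Rmult_lt_0_compat; lra.
    apply Rdiv_lt_0_compat; [|lra]. repeat apply Rmult_lt_0_compat; lra.
  - rewrite w_step by auto. apply Rmult_lt_0_compat; auto.
    apply (rr_bound q s1 a1 a2 b2 t); auto. apply xl_ge; lra.
Qed.

Lemma u_decay q s1 a1 a2 b2 t (K : nat) : 0 < q < 1 -> a1 < 0 -> 0 < a2 <= b2 -> s1 <> 0 -> t / s1 < 0 ->
  exists J, forall j, (J <= j)%nat ->
    w q s1 a1 a2 b2 t (S j) * (1 + xl q b2 (S j)) ^ K <= / 2 * (w q s1 a1 a2 b2 t j * (1 + xl q b2 j) ^ K).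
Proof.
  intros Hq Ha1 Hab Hs Hts.
  pose proof (cc_pos q s1 t Hq Hs Hts) as Hc.
  set (D := / cc q s1 t * (1 - a1 / b2) / (1 - q) ^ 2).
  assert (HD : 0 < D).
  { unfold D. apply Rdiv_lt_0_compat. apply Rmult_lt_0_compat. apply Rinv_0_lt_compat; auto.
    assert (a1 / b2 < 0) by (apply Rdiv_neg_pos; lra). lra. apply pow_lt; lra. }
  assert (HqK : 0 < (/ q) ^ K) by (apply pow_lt; apply Rinv_0_lt_compat; lra).
  set (eps := b2 / (2 * D * (/ q) ^ K)).
  assert (Heps : 0 < eps) by (unfold eps; apply Rdiv_lt_0_compat; nra).
  destruct (pow_lt_1_zero q ltac:(rewrite Rabs_pos_eq; lra) eps Heps) as [J HJ].
  exists J. intros j Hj.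
  specialize (HJ j Hj). rewrite Rabs_pos_eq in HJ by (left; apply pow_lt; lra).
  pose proof (xl_ge q b2 j Hq ltac:(lra)) as Hy.
  destruct (rr_bound q s1 a1 a2 b2 t (xl q b2 j) Hq Ha1 Hab Hs Hts Hy) as [Hr0 Hr]. fold D in Hr.
  assert (Hxl : xl q b2 j = b2 / q ^ j) by (unfold xl; rewrite pow_inv; field; apply pow_nonzero; lra).
  assert (Hqj : 0 < q ^ j) by (apply pow_lt; lra).
  assert (HrK : rr q s1 a1 a2 b2 t (xl q b2 j) * (/ q) ^ K <= / 2).
  { apply Rle_trans with (D / xl q b2 j * (/ q) ^ K). apply Rmult_le_compat_r; lra.
    rewrite Hxl. replace (D / (b2 / q ^ j) * (/ q) ^ K) with (q ^ j * (D * (/ q) ^ K / b2)) by (field; lra).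
    apply Rle_trans with (eps * (D * (/ q) ^ K / b2)).
    apply Rmult_le_compat_r. apply Rdiv_le_0_compat; nra. lra.
    right. unfold eps. field. lra. }
  pose proof (w_pos q s1 a1 a2 b2 t Hq Ha1 Hab Hs Hts j) as Hw.
  rewrite w_step, xl_S by auto.
  assert (Hp : (1 + / q * xl q b2 j) ^ K <= (/ q) ^ K * (1 + xl q b2 j) ^ K).
  { rewrite <- Rpow_mult_distr. apply pow_incr. split. 
    assert (0 < / q) by (apply Rinv_0_lt_compat; lra). nra.
    assert (1 <= / q) by (rewrite <- Rinv_1; apply Rinv_le_contravar; lra). nra. }
  assert (Hp0 : 0 <= (1 + xl q b2 j) ^ K) by (apply pow_le; lra).
  apply Rle_trans with (w q s1 a1 a2 b2 t j * rr q s1 a1 a2 b2 t (xl q b2 j) * ((/ q) ^ K * (1 + xl q b2 j) ^ K)).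
  apply Rmult_le_compat_l. apply Rmult_le_pos; lra. auto.
  replace (w q s1 a1 a2 b2 t j * rr q s1 a1 a2 b2 t (xl q b2 j) * ((/ q) ^ K * (1 + xl q b2 j) ^ K))
    with ((rr q s1 a1 a2 b2 t (xl q b2 j) * (/ q) ^ K) * (w q s1 a1 a2 b2 t j * (1 + xl q b2 j) ^ K)) by ring.
  apply Rmult_le_compat_r. apply Rmult_le_pos; lra. auto.
Qed.

Lemma geom_decay (u : nat -> R) (J : nat) :
  (forall j, (J <= j)%nat -> u (S j) <= / 2 * u j) -> forall k, u (k + J)%nat <= u J * (/ 2) ^ k.
Proof.
  intros H k. induction k. simpl. lra.
  simpl. apply Rle_trans with (/ 2 * u (k + J)%nat). apply H; lia.
  replace (u J * (/ 2 * (/ 2) ^ k)) with (/ 2 * (u J * (/ 2) ^ k)) by ring.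
  apply Rmult_le_compat_l; lra.
Qed.

Lemma poly_bound N c y : 0 <= y ->
  Rabs (ev N c y) <= sum_f_R0 (fun k => Rabs (c k)) N * (1 + y) ^ N.
Proof.
  intro Hy. induction N.
  - unfold ev; simpl. rewrite Rmult_1_r. lra.
  - rewrite ev_S. cbn [sum_f_R0].
    eapply Rle_trans. apply Rabs_triang.
    rewrite Rabs_mult, (Rabs_pos_eq (y ^ S N)) by (apply pow_le; lra).
    assert (H1 : (1 + y) ^ N <= (1 + y) ^ S N).
    { simpl. pose proof (pow_le (1 + y) N ltac:(lra)). nra. }
    assert (H2 : y ^ S N <= (1 + y) ^ S N) by (apply pow_incr; lra).
    assert (H3 : 0 <= sum_f_R0 (fun k => Rabs (c k)) N).
    { clear. induction N; simpl. apply Rabs_pos. pose proof (Rabs_pos (c (S N))). lra. }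
    pose proof (Rabs_pos (c (S N))).
    assert (sum_f_R0 (fun k => Rabs (c k)) N * (1 + y) ^ N <= sum_f_R0 (fun k => Rabs (c k)) N * (1 + y) ^ S N)
      by (apply Rmult_le_compat_l; auto).
    assert (Rabs (c (S N)) * y ^ S N <= Rabs (c (S N)) * (1 + y) ^ S N)
      by (apply Rmult_le_compat_l; auto).
    lra.
Qed.

Lemma lattice_eq q s1 a1 t t0 b2 n j : 0 < q < 1 -> t <> 0 -> 0 < b2 ->
  let P := Pn q s1 a1 t t0 n in
  Aco q s1 a1 (xl q b2 j) * (P (xl q b2 (S j)) - P (xl q b2 j))
  - Bco q s1 a1 t t0 (xl q b2 j) * (P (xl q b2 j) - P (q * xl q b2 j))
  + lambda_n q t 0 n * P (xl q b2 j) = 0.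
Proof.
  intros Hq Ht Hb P. pose proof (xl_ge q b2 j Hq Hb).
  rewrite xl_S, <- Dq_lattice by lra. apply Pn_eq; auto.
Qed.

Lemma u_lim q s1 a1 a2 b2 t K : 0 < q < 1 -> a1 < 0 -> 0 < a2 <= b2 -> s1 <> 0 -> t / s1 < 0 ->
  is_lim_seq (fun N => w q s1 a1 a2 b2 t N * (1 + xl q b2 N) ^ K) 0
  /\ ex_series (fun N => w q s1 a1 a2 b2 t N * (1 + xl q b2 N) ^ K).
Proof.
  intros Hq Ha1 Hab Hs Hts.
  set (u := fun N => w q s1 a1 a2 b2 t N * (1 + xl q b2 N) ^ K).
  assert (Hu0 : forall N, 0 <= u N).
  { intro N. unfold u. apply Rmult_le_pos. left; apply w_pos; auto.
    apply pow_le. pose proof (xl_ge q b2 N Hq ltac:(lra)). lra. }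
  destruct (u_decay q s1 a1 a2 b2 t K Hq Ha1 Hab Hs Hts) as [J HJ].
  assert (Hg := geom_decay u J HJ).
  split.
  - apply (is_lim_seq_incr_n u J 0).
    apply (is_lim_seq_le_le (fun _ => 0) _ (fun k => u J * (/ 2) ^ k)).
    intro k; split; auto.
    apply is_lim_seq_const.
    replace (Finite 0) with (Rbar_mult (u J) 0) by (simpl; f_equal; ring).
    apply is_lim_seq_scal_l. apply is_lim_seq_geom. rewrite Rabs_pos_eq; lra.
  - apply (ex_series_incr_n u J).
    apply (ex_series_le (V := R_CompleteNormedModule) (fun k => u (J + k)%nat) (fun k => u J * (/ 2) ^ k)).
    + intro k. rewrite Nat.add_comm. change (norm (u (k + J)%nat)) with (Rabs (u (k + J)%nat)).
      rewrite Rabs_pos_eq by auto. auto.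
    + apply (ex_series_scal_l (V := R_NormedModule) (u J) (fun k => (/ 2) ^ k)).
      exists (/ (1 - / 2)). apply is_series_geom. rewrite Rabs_pos_eq; lra.
Qed.

Lemma Aco_bound q s1 a1 b2 y : 0 < q < 1 -> a1 < 0 -> 0 < b2 -> b2 <= y ->
  Rabs (Aco q s1 a1 y) <= Rabs s1 * (q ^ 2 / (1 - q) ^ 2) * (/ b2 + - a1 * (/ b2) ^ 2).
Proof.
  intros Hq Ha1 Hb Hy.
  assert (E : Aco q s1 a1 y = s1 * (q ^ 2 / (1 - q) ^ 2) * (/ y + - a1 * (/ y) ^ 2)).
  { unfold Aco, sigma1. field. split; lra. }
  rewrite E. rewrite !Rabs_mult.
  assert (H1 : / y <= / b2) by (apply Rinv_le_contravar; lra).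
  assert (H0 : 0 < / y) by (apply Rinv_0_lt_compat; lra).
  assert (H2 : (/ y) ^ 2 <= (/ b2) ^ 2) by (apply pow_incr; lra).
  assert (H3 : 0 <= (/ y) ^ 2) by (apply pow_le; lra).
  rewrite (Rabs_pos_eq (q ^ 2 / (1 - q) ^ 2)).
  2:{ apply Rdiv_le_0_compat. apply pow_le; lra. apply pow_lt; lra. }
  rewrite (Rabs_pos_eq (/ y + - a1 * (/ y) ^ 2)) by nra.
  apply Rmult_le_compat_l. apply Rmult_le_pos. apply Rabs_pos. apply Rdiv_le_0_compat. apply pow_le; lra. apply pow_lt; lra.
  nra.
Qed.

Lemma sum_abs_nonneg (c : nat -> R) N : 0 <= sum_f_R0 (fun k => Rabs (c k)) N.
Proof. induction N; simpl. apply Rabs_pos. pose proof (Rabs_pos (c (S N))). lra. Qed.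

Lemma P_nonzero q s1 a1 t t0 b2 n : 0 < q < 1 -> 0 < b2 ->
  exists j, Pn q s1 a1 t t0 n (xl q b2 j) <> 0.
Proof.
  intros Hq Hb. set (c := coef q s1 a1 t t0 n).
  assert (Hcn : c n = 1) by apply coef_n.
  destruct n as [|n'].
  - exists O. unfold Pn. fold c. unfold ev; simpl. rewrite Hcn. lra.
  - set (S0 := sum_f_R0 (fun k => Rabs (c k)) n').
    assert (HS0 : 0 <= S0).
    { apply sum_abs_nonneg. }
    set (M := 1 + S0 * 2 ^ n').
    assert (HM : 1 <= M) by (unfold M; pose proof (pow_le 2 n' ltac:(lra)); nra).
    destruct (pow_lt_1_zero q ltac:(rewrite Rabs_pos_eq; lra) (b2 / M) ltac:(apply Rdiv_lt_0_compat; lra))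
      as [J HJ].
    exists J. specialize (HJ J (le_n J)). rewrite Rabs_pos_eq in HJ by (left; apply pow_lt; lra).
    assert (Hqj : 0 < q ^ J) by (apply pow_lt; lra).
    assert (Hxl : xl q b2 J = b2 / q ^ J) by (unfold xl; rewrite pow_inv; field; lra).
    set (y := xl q b2 J) in *.
    assert (Hy : M < y).
    { rewrite Hxl. apply Rmult_lt_reg_r with (q ^ J); auto. unfold Rdiv. rewrite Rmult_assoc, Rinv_l by lra.
      apply Rmult_lt_reg_r with (/ M). apply Rinv_0_lt_compat; lra.
      replace (M * q ^ J * / M) with (q ^ J) by (field; lra). lra. }
    unfold Pn. fold c. rewrite ev_S, Hcn.
    pose proof (poly_bound n' c y ltac:(lra)) as Hb1. fold S0 in Hb1.
    assert (H2 : (1 + y) ^ n' <= 2 ^ n' * y ^ n').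
    { rewrite <- Rpow_mult_distr. apply pow_incr. lra. }
    assert (Hyn : 0 < y ^ n') by (apply pow_lt; lra).
    assert (H3 : S0 * (1 + y) ^ n' <= S0 * 2 ^ n' * y ^ n').
    { rewrite Rmult_assoc. apply Rmult_le_compat_l; auto. }
    assert (H4 : S0 * 2 ^ n' * y ^ n' < y * y ^ n').
    { apply Rmult_lt_compat_r; auto. unfold M in Hy. lra. }
    change (y ^ S n') with (y * y ^ n').
    intro h. assert (ev n' c y = - (y * y ^ n')) by lra.
    rewrite H in Hb1. rewrite Rabs_Ropp, Rabs_pos_eq in Hb1 by nra. lra.
Qed.

Lemma lambda_eq q t n : 0 < q < 1 -> lambda_n q t 0 n = - qs q n * t.
Proof. intro Hq. unfold lambda_n. rewrite qnum_nat, <- qs_prop. field. lra. Qed.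

Definition Sab q s1 a1 t t0 n := sum_f_R0 (fun k => Rabs (coef q s1 a1 t t0 n k)) n.

Lemma P_bound0 q s1 a1 t t0 b2 n N : 0 < q < 1 -> 0 < b2 ->
  Rabs (Pn q s1 a1 t t0 n (xl q b2 N)) <= Sab q s1 a1 t t0 n * (1 + xl q b2 N) ^ n.
Proof. intros Hq Hb. apply poly_bound. pose proof (xl_ge q b2 N Hq Hb). lra. Qed.

Lemma P_bound1 q s1 a1 t t0 b2 n N : 0 < q < 1 -> 0 < b2 ->
  Rabs (Pn q s1 a1 t t0 n (xl q b2 (S N))) <= Sab q s1 a1 t t0 n * (/ q) ^ n * (1 + xl q b2 N) ^ n.
Proof.
  intros Hq Hb. eapply Rle_trans. apply P_bound0; auto.
  rewrite Rmult_assoc. apply Rmult_le_compat_l. apply sum_abs_nonneg.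
  rewrite xl_S, <- Rpow_mult_distr. apply pow_incr. pose proof (xl_ge q b2 N Hq Hb).
  assert (0 < / q) by (apply Rinv_0_lt_compat; lra).
  assert (1 <= / q) by (rewrite <- Rinv_1; apply Rinv_le_contravar; lra). split; nra.
Qed.

Lemma real_orth q s1 a1 t t0 a2 b2 n m : 0 < q < 1 -> s1 <> 0 -> t <> 0 ->
  (forall x, sigma2 q s1 a1 t t0 x = (q - 1) * t * (x - a2) * (x - b2)) ->
  a1 < 0 -> 0 < a2 <= b2 -> t / s1 < 0 -> n <> m ->
  is_series (fun j => w q s1 a1 a2 b2 t j * Pn q s1 a1 t t0 n (xl q b2 j) * Pn q s1 a1 t t0 m (xl q b2 j)) 0.
Proof.
  intros Hq Hs Ht Hsig Ha1 Hab Hts Hnm.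
  assert (Hb : 0 < b2) by lra.
  set (F := fun j => Pn q s1 a1 t t0 n (xl q b2 j)).
  set (G := fun j => Pn q s1 a1 t t0 m (xl q b2 j)).
  set (lf := lambda_n q t 0 n). set (lg := lambda_n q t 0 m).
  assert (HP : forall j, w q s1 a1 a2 b2 t j * Aco q s1 a1 (xl q b2 j)
                 = w q s1 a1 a2 b2 t (S j) * Bco q s1 a1 t t0 (xl q b2 (S j))).
  { intro j. pose proof (xl_ge q b2 j Hq Hb). rewrite w_step, xl_S by auto.
    rewrite Rmult_assoc, pearson with (a2 := a2) (b2 := b2); auto; try lra; nra. }
  assert (HB0 : Bco q s1 a1 t t0 (xl q b2 O) = 0).
  { unfold Bco, xl. rewrite Hsig. simpl. unfold Rdiv. ring. }
  assert (Hm : forall k j, Pn q s1 a1 t t0 k (q * xl q b2 (S j)) = Pn q s1 a1 t t0 k (xl q b2 j)).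
  { intros k j. rewrite xl_S. f_equal. field. lra. }
  assert (Hid := sum_id (w q s1 a1 a2 b2 t) (fun j => Aco q s1 a1 (xl q b2 j)) (fun j => Bco q s1 a1 t t0 (xl q b2 j))
     F G (fun j => Pn q s1 a1 t t0 n (q * xl q b2 j)) (fun j => Pn q s1 a1 t t0 m (q * xl q b2 j)) lf lg
     (fun j => lattice_eq q s1 a1 t t0 b2 n j Hq Ht Hb)
     (fun j => lattice_eq q s1 a1 t t0 b2 m j Hq Ht Hb)
     (fun j => Hm n j) (fun j => Hm m j) HB0 HP).
  assert (Hlfg : lf - lg <> 0).
  { unfold lf, lg. rewrite !lambda_eq by auto.
    destruct (Nat.lt_total n m) as [h|[h|h]].
    - pose proof (qs_lt q n m ltac:(lra) h). intro E. apply Ht. nra.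
    - contradiction.
    - pose proof (qs_lt q m n ltac:(lra) h). intro E. apply Ht. nra. }
  set (T := fun N => w q s1 a1 a2 b2 t N * Aco q s1 a1 (xl q b2 N) * (F N * G (S N) - G N * F (S N))).
  set (MA := Rabs s1 * (q ^ 2 / (1 - q) ^ 2) * (/ b2 + - a1 * (/ b2) ^ 2)).
  set (Cst := MA * (Sab q s1 a1 t t0 n * Sab q s1 a1 t t0 m * ((/ q) ^ m + (/ q) ^ n))).
  destruct (u_lim q s1 a1 a2 b2 t (n + m) Hq Ha1 Hab Hs Hts) as [Hu _].
  assert (HT : is_lim_seq T 0).
  { apply (is_lim_seq_le_le (fun N => - (Cst * (w q s1 a1 a2 b2 t N * (1 + xl q b2 N) ^ (n + m))))
                            _ (fun N => Cst * (w q s1 a1 a2 b2 t N * (1 + xl q b2 N) ^ (n + m)))).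
    - intro N. apply Rabs_le_between.
      pose proof (w_pos q s1 a1 a2 b2 t Hq Ha1 Hab Hs Hts N) as Hw.
      pose proof (xl_ge q b2 N Hq Hb) as Hy.
      pose proof (Aco_bound q s1 a1 b2 (xl q b2 N) Hq Ha1 Hb Hy) as HA. fold MA in HA.
      pose proof (P_bound0 q s1 a1 t t0 b2 n N Hq Hb) as Hf0.
      pose proof (P_bound0 q s1 a1 t t0 b2 m N Hq Hb) as Hg0.
      pose proof (P_bound1 q s1 a1 t t0 b2 n N Hq Hb) as Hf1.
      pose proof (P_bound1 q s1 a1 t t0 b2 m N Hq Hb) as Hg1.
      fold (F N) in Hf0. fold (G N) in Hg0. fold (F (S N)) in Hf1. fold (G (S N)) in Hg1.
      set (y := xl q b2 N) in *.
      set (Sf := Sab q s1 a1 t t0 n) in *. set (Sg := Sab q s1 a1 t t0 m) in *.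
      assert (HSf : 0 <= Sf) by apply sum_abs_nonneg. assert (HSg : 0 <= Sg) by apply sum_abs_nonneg.
      assert (Hpn : 0 <= (1 + y) ^ n) by (apply pow_le; lra).
      assert (Hpm : 0 <= (1 + y) ^ m) by (apply pow_le; lra).
      assert (Hqn : 0 <= (/ q) ^ n) by (apply pow_le; left; apply Rinv_0_lt_compat; lra).
      assert (Hqm : 0 <= (/ q) ^ m) by (apply pow_le; left; apply Rinv_0_lt_compat; lra).
      assert (H1 : Rabs (F N * G (S N)) <= Sf * Sg * (/ q) ^ m * (1 + y) ^ (n + m)).
      { rewrite Rabs_mult, pow_add.
        replace (Sf * Sg * (/ q) ^ m * ((1 + y) ^ n * (1 + y) ^ m))
          with ((Sf * (1 + y) ^ n) * (Sg * (/ q) ^ m * (1 + y) ^ m)) by ring.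
        apply Rmult_le_compat; auto using Rabs_pos. }
      assert (H2 : Rabs (G N * F (S N)) <= Sf * Sg * (/ q) ^ n * (1 + y) ^ (n + m)).
      { rewrite Rabs_mult, pow_add.
        replace (Sf * Sg * (/ q) ^ n * ((1 + y) ^ n * (1 + y) ^ m))
          with ((Sg * (1 + y) ^ m) * (Sf * (/ q) ^ n * (1 + y) ^ n)) by ring.
        apply Rmult_le_compat; auto using Rabs_pos. }
      assert (H3 : Rabs (F N * G (S N) - G N * F (S N)) <= Sf * Sg * ((/ q) ^ m + (/ q) ^ n) * (1 + y) ^ (n + m)).
      { eapply Rle_trans. apply Rabs_triang. rewrite Rabs_Ropp. lra. }
      unfold T. fold y. rewrite !Rabs_mult, (Rabs_pos_eq (w q s1 a1 a2 b2 t N)) by lra.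
      unfold Cst.
      replace (MA * (Sf * Sg * ((/ q) ^ m + (/ q) ^ n)) * (w q s1 a1 a2 b2 t N * (1 + y) ^ (n + m)))
        with (w q s1 a1 a2 b2 t N * (MA * (Sf * Sg * ((/ q) ^ m + (/ q) ^ n) * (1 + y) ^ (n + m)))) by ring.
      rewrite Rmult_assoc. apply Rmult_le_compat_l. lra.
      apply Rmult_le_compat; auto using Rabs_pos.
    - replace (Finite 0) with (Rbar_mult (- Cst) 0) by (simpl; f_equal; ring).
      apply (is_lim_seq_ext (fun N => - Cst * (w q s1 a1 a2 b2 t N * (1 + xl q b2 N) ^ (n + m)))).
      intro; ring. apply is_lim_seq_scal_l. auto.
    - replace (Finite 0) with (Rbar_mult Cst 0) by (simpl; f_equal; ring).
      apply is_lim_seq_scal_l. auto. }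
  apply is_series_Reals. unfold infinite_sum. apply is_lim_seq_Reals.
  apply (is_lim_seq_ext (fun N => / (lf - lg) * T N)).
  - intro N. unfold T. rewrite <- Hid. rewrite <- Rmult_assoc, Rinv_l by auto. rewrite Rmult_1_l. reflexivity.
  - replace (Finite 0) with (Rbar_mult (/ (lf - lg)) 0) by (simpl; f_equal; ring).
    apply is_lim_seq_scal_l. auto.
Qed.

Lemma sum_ge_term (a : nat -> R) j M : (forall k, 0 <= a k) -> (j <= M)%nat -> a j <= sum_f_R0 a M.
Proof.
  intros Ha H. induction M.
  - assert (j = O) by lia. subst. simpl. lra.
  - destruct (Nat.eq_dec j (S M)) as [->|h].
    + simpl. pose proof (sum_abs_nonneg a M). 
      assert (0 <= sum_f_R0 a M).
      { clear -Ha. induction M; simpl. apply Ha. pose proof (Ha (S M)). lra. }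
      lra.
    + simpl. pose proof (Ha (S M)). assert (a j <= sum_f_R0 a M) by (apply IHM; lia). lra.
Qed.

Lemma real_norm q s1 a1 t t0 a2 b2 n : 0 < q < 1 -> s1 <> 0 -> t <> 0 ->
  a1 < 0 -> 0 < a2 <= b2 -> t / s1 < 0 ->
  exists L, 0 < L /\
  is_series (fun j => w q s1 a1 a2 b2 t j * Pn q s1 a1 t t0 n (xl q b2 j) * Pn q s1 a1 t t0 n (xl q b2 j)) L.
Proof.
  intros Hq Hs Ht Ha1 Hab Hts. assert (Hb : 0 < b2) by lra.
  set (a := fun j => w q s1 a1 a2 b2 t j * Pn q s1 a1 t t0 n (xl q b2 j) * Pn q s1 a1 t t0 n (xl q b2 j)).
  assert (Ha : forall j, 0 <= a j).
  { intro j. unfold a. rewrite Rmult_assoc. apply Rmult_le_pos.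
    left; apply w_pos; auto. apply Rle_0_sqr. }
  destruct (u_lim q s1 a1 a2 b2 t (n + n) Hq Ha1 Hab Hs Hts) as [_ Hus].
  set (Sf := Sab q s1 a1 t t0 n).
  assert (Hex : ex_series a).
  { apply (ex_series_le (V := R_CompleteNormedModule) a
             (fun j => Sf * Sf * (w q s1 a1 a2 b2 t j * (1 + xl q b2 j) ^ (n + n)))).
    - intro j. change (norm (a j)) with (Rabs (a j)). rewrite Rabs_pos_eq by auto.
      pose proof (P_bound0 q s1 a1 t t0 b2 n j Hq Hb) as Hf. fold Sf in Hf.
      pose proof (w_pos q s1 a1 a2 b2 t Hq Ha1 Hab Hs Hts j) as Hw.
      unfold a. rewrite pow_add.
      set (F := Pn q s1 a1 t t0 n (xl q b2 j)) in *.
      replace (w q s1 a1 a2 b2 t j * F * F) with (w q s1 a1 a2 b2 t j * (Rabs F * Rabs F))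
        by (rewrite <- Rabs_mult, Rabs_pos_eq by apply Rle_0_sqr; ring).
      replace (Sf * Sf * (w q s1 a1 a2 b2 t j * ((1 + xl q b2 j) ^ n * (1 + xl q b2 j) ^ n)))
        with (w q s1 a1 a2 b2 t j * ((Sf * (1 + xl q b2 j) ^ n) * (Sf * (1 + xl q b2 j) ^ n))) by ring.
      apply Rmult_le_compat_l. lra. apply Rmult_le_compat; auto using Rabs_pos.
    - apply (ex_series_scal_l (V := R_NormedModule) (Sf * Sf) _ Hus). }
  exists (Series a). split; [|apply Series_correct; auto].
  destruct (P_nonzero q s1 a1 t t0 b2 n Hq Hb) as [j0 Hj0].
  assert (Haj0 : 0 < a j0).
  { unfold a. rewrite Rmult_assoc. apply Rmult_lt_0_compat. apply w_pos; auto.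
    apply Rsqr_pos_lt. auto. }
  pose proof (Series_correct a Hex) as HS.
  apply is_series_Reals in HS. unfold infinite_sum in HS. apply is_lim_seq_Reals in HS.
  apply (is_lim_seq_incr_n _ j0) in HS.
  assert (H := is_lim_seq_le (fun _ => a j0) _ (a j0) (Series a)
                (fun N => sum_ge_term a j0 (N + j0) Ha ltac:(lia)) (is_lim_seq_const _) HS).
  simpl in H. lra.
Qed.


Lemma sum_n_RtoC (u : nat -> R) N : @sum_n C_AbelianMonoid (fun n => RtoC (u n)) N = RtoC (sum_n u N).
Proof.
  induction N.
  - rewrite !sum_O. reflexivity.
  - rewrite !sum_Sn, IHN. unfold plus; simpl. unfold RtoC, Cplus. simpl. f_equal. ring.
Qed.
Lemma is_series_RtoC (u : nat -> R) L : is_series u L -> is_series (fun n => RtoC (u n)) (RtoC L).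
Proof.
  intros Hu P [eps Heps].
  assert (H := Hu (ball L eps) (locally_ball L eps)).
  destruct H as [N HN]. exists N. intros n Hn.
  apply Heps. rewrite sum_n_RtoC. split; simpl. now apply HN. apply ball_center.
Qed.
Lemma is_series_Cscal (K0 : C) (u : nat -> R) L : is_series u L ->
  is_series (fun n => Cmult K0 (RtoC (u n))) (Cmult K0 (RtoC L)).
Proof.
  intro H. apply (is_series_scal (V:=C_NormedModule) K0 _ _ (is_series_RtoC _ _ H)).
Qed.

Lemma cexp_RtoC_ne0 z L : 0 < L -> Cmult (cexp z) (RtoC L) <> RtoC 0.
Proof.
  intros HL E. destruct z as [a b]. unfold cexp, Cmult, RtoC in E. simpl in E.
  injection E as E1 E2.
  pose proof (exp_pos a). pose proof (sin2_cos2 b). unfold Rsqr in *.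
  assert (cos b = 0).
  { assert (exp a * cos b * L = 0) by lra.
    apply Rmult_integral in H1. destruct H1 as [H1|H1]; [|lra].
    apply Rmult_integral in H1. destruct H1; lra. }
  assert (sin b = 0).
  { assert (exp a * sin b * L = 0) by lra.
    apply Rmult_integral in H2. destruct H2 as [H2|H2]; [|lra].
    apply Rmult_integral in H2. destruct H2; lra. }
  rewrite H1, H2 in H0. lra.
Qed.

Lemma abs_cpow_xl q s1 t b2 alpha j : 0 < q < 1 -> 0 < b2 ->
  cexp (Cmult alpha (RtoC (ln q))) = RtoC (cc q s1 t) -> 0 < cc q s1 t ->
  abs_cpow (xl q b2 j) alpha = Cmult (cexp (Cmult alpha (RtoC (ln b2)))) (RtoC ((/ cc q s1 t) ^ j)).
Proof.
  intros Hq Hb Hal Hc. unfold abs_cpow. induction j.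
  - unfold xl. simpl. rewrite Rmult_1_l, Rabs_pos_eq by lra.
    destruct (cexp (Cmult alpha (RtoC (ln b2)))) as [u v]. unfold Cmult, RtoC; simpl. f_equal; ring.
  - pose proof (xl_ge q b2 j Hq Hb) as Hy.
    rewrite xl_S, Rabs_pos_eq.
    2:{ apply Rmult_le_pos. left; apply Rinv_0_lt_compat; lra. lra. }
    rewrite Rabs_pos_eq in IHj by lra.
    rewrite ln_mult, ln_Rinv by (try apply Rinv_0_lt_compat; lra).
    set (L := ln (xl q b2 j)) in *.
    set (X := cexp (Cmult alpha (RtoC (- ln q + L)))).
    assert (E : Cmult X (RtoC (cc q s1 t)) = cexp (Cmult alpha (RtoC L))).
    { unfold X. rewrite <- Hal, <- cexp_add. f_equal. destruct alpha as [a b].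
      unfold Cmult, Cplus, RtoC; simpl. f_equal; ring. }
    rewrite IHj in E. clearbody X. destruct X as [x1 x2].
    destruct (cexp (Cmult alpha (RtoC (ln b2)))) as [u v].
    unfold Cmult, RtoC in E |- *; simpl in E |- *. injection E as E1 E2.
    f_equal.
    + apply Rmult_eq_reg_r with (cc q s1 t); [|lra].
      replace (x1 * cc q s1 t) with (x1 * cc q s1 t - x2 * 0) by ring. rewrite E1. field. lra.
    + apply Rmult_eq_reg_r with (cc q s1 t); [|lra].
      replace (x2 * cc q s1 t) with (x1 * 0 + x2 * cc q s1 t) by ring. rewrite E2. field. lra.
Qed.

Theorem theorem5p4
  (q s1 a1 t t0 a2 b2 : R) (alpha : C)
  (Hq : 0 < q < 1)
  (Hs1 : s1 <> 0) (Ha1 : a1 <> 0) (Ht : t <> 0)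
  (Hsig2 : forall x, sigma2 q s1 a1 t t0 x = (q - 1) * t * (x - a2) * (x - b2))
  (Hord : a1 < 0 /\ 0 < a2 /\ a2 <= b2)
  (HLam : t / s1 < 0)
  (Halpha : cexp (Cmult alpha (RtoC (ln q))) = RtoC (/ q ^ 2 * ((q - 1) * t) / s1)) :
  exists (P : nat -> R -> R) (d2 : nat -> C),
    (forall n, is_poly_deg (P n) n) /\
    (forall n x, sigma1 s1 a1 x * Dq (/ q) (Dq q (P n)) x + tau t t0 x * Dq q (P n) x
                 + lambda_n q t 0 n * P n x = 0) /\
    (forall n, d2 n <> RtoC 0) /\
    (forall m n, qint_inf_is q b2 (fun x => Cmult (RtoC (P n x * P m x)) (rho q alpha a1 a2 b2 x))
                   (if Nat.eqb m n then d2 n else RtoC 0)).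
Proof.
  destruct Hord as [Ha1n [Ha2 Hab]].
  assert (Hab' : 0 < a2 <= b2) by lra. assert (Hb : 0 < b2) by lra.
  pose proof (cc_pos q s1 t Hq Hs1 HLam) as Hc.
  set (K0 := cexp (Cmult alpha (RtoC (ln b2)))).
  set (Lv := fun n => Series (fun j => w q s1 a1 a2 b2 t j * Pn q s1 a1 t t0 n (xl q b2 j)
                                        * Pn q s1 a1 t t0 n (xl q b2 j))).
  exists (fun n => Pn q s1 a1 t t0 n), (fun n => Cmult K0 (RtoC (Lv n))).
  assert (Hterm : forall n m j,
    Cmult (RtoC ((/ q - 1) * b2 * (/ q) ^ j))
      ((fun x => Cmult (RtoC (Pn q s1 a1 t t0 n x * Pn q s1 a1 t t0 m x)) (rho q alpha a1 a2 b2 x))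
         ((/ q) ^ j * b2))
    = Cmult K0 (RtoC (w q s1 a1 a2 b2 t j * Pn q s1 a1 t t0 n (xl q b2 j) * Pn q s1 a1 t t0 m (xl q b2 j)))).
  { intros n m j. cbv beta. change ((/ q) ^ j * b2) with (xl q b2 j).
    unfold rho. change (exp (/ 2 * (logq q (xl q b2 j) - 1) * ln (xl q b2 j)) *
      qpoch_inf (q * a2 / xl q b2 j) q * qpoch_inf (q * b2 / xl q b2 j) q / qpoch_inf (a1 / xl q b2 j) q)
      with (Rw q a1 a2 b2 (xl q b2 j)).
    rewrite (abs_cpow_xl q s1 t b2 alpha j Hq Hb Halpha Hc). fold K0.
    destruct K0 as [u v]. unfold w, Cmult, RtoC; simpl. f_equal; ring. }
  split; [|split; [|split]].
  - intro n. exists (coef q s1 a1 t t0 n). split.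
    + rewrite coef_n. lra.
    + intro x. reflexivity.
  - intros n x. apply Pn_eq; auto.
  - intro n. destruct (real_norm q s1 a1 t t0 a2 b2 n Hq Hs1 Ht Ha1n Hab' HLam) as [L [HL HS]].
    unfold Lv. rewrite (is_series_unique _ _ HS). apply cexp_RtoC_ne0; auto.
  - intros m n. unfold qint_inf_is.
    apply (is_series_ext (fun j => Cmult K0 (RtoC (w q s1 a1 a2 b2 t j * Pn q s1 a1 t t0 n (xl q b2 j)
                                                 * Pn q s1 a1 t t0 m (xl q b2 j))))).
    { intro j. symmetry. apply Hterm. }
    destruct (Nat.eqb_spec m n) as [->|Hmn].
    + destruct (real_norm q s1 a1 t t0 a2 b2 n Hq Hs1 Ht Ha1n Hab' HLam) as [L [HL HS]].
      unfold Lv. rewrite (is_series_unique _ _ HS). apply is_series_Cscal. auto.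
    + replace (RtoC 0) with (Cmult K0 (RtoC 0)).
      2:{ destruct K0 as [u v]. unfold Cmult, RtoC; simpl. f_equal; ring. }
      apply is_series_Cscal. apply real_orth; auto.
Qed.
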